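(* Let $I=(f_1,\dots,f_n)\subset R=\mathbb{K}[x_1,\dots,x_n]$ be a complete intersection such that for every $d$-dimensional simplicial complex $\Delta$ on vertex set $[n]$, $f_i\in I_\Delta$ for every $i>d+1$. Then $f_1,\dots,f_{d+1}$ is a system of parameters for $I_\Delta$ for every $d$-dimensional simplicial complex $\Delta$ on $[n]$.
   Context: $I_\Delta$ is the Stanley–Reisner ideal of $\Delta$. For a homogeneous ideal $I'$ with $\dim R/I'=d+1$, a system of parameters is a sequence of homogeneous elements $g_1,\dots,g_{d+1}$ such that $R/(I'+(g_1,\dots,g_{d+1}))$ is a finite-dimensional $\mathbb{K}$-vector space. *)

(* Defs.v *)
From HB Require Import structures.
From mathcomp Require Import all_boot all_order all_algebra.
From mathcomp Require Import mpoly.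
Set Implicit Arguments. Unset Strict Implicit. Unset Printing Implicit Defensive.
Import GRing.Theory.
Local Open Scope ring_scope.

Section Defs.
Variables (K : fieldType) (n : nat).
Local Notation R := {mpoly K[n]}.

Definition ideal_gen (S : R -> Prop) (p : R) : Prop :=
  exists (m : nat) (r s : 'I_m -> R),
    (forall j, S (s j)) /\ p = \sum_(j < m) r j * s j.

Definition ideal_add (J : R -> Prop) (gs : seq R) : R -> Prop :=
  ideal_gen (fun q => J q \/ q \in gs).

Definition fin_dim_quotient (J : R -> Prop) : Prop :=
  exists (m : nat) (b : 'I_m -> R),
    forall p : R, exists c : 'I_m -> K, J (p - \sum_(j < m) c j *: b j).

Definition homogeneous (p : R) : Prop := exists k : nat, p \is k.-homog.

Definition regular_sequence (m : nat) (f : 'I_m -> R) : Prop :=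
  (forall (i : 'I_m) (p : R),
      ideal_gen (fun q => exists j : 'I_m, (j < i)%N /\ q = f j) (p * f i) ->
      ideal_gen (fun q => exists j : 'I_m, (j < i)%N /\ q = f j) p)
  /\ ~ ideal_gen (fun q => exists j : 'I_m, q = f j) 1.

Definition complete_intersection (f : 'I_n -> R) : Prop :=
  (forall i, homogeneous (f i)) /\ regular_sequence f.

Definition simplicial_complex_dim (Delta : {set {set 'I_n}}) (d : nat) : Prop :=
  [/\ set0 \in Delta,
      (forall F G : {set 'I_n}, F \in Delta -> G \subset F -> G \in Delta),
      (forall i : 'I_n, [set i] \in Delta),
      (exists2 F, F \in Delta & #|F| = d.+1) &
      (forall F, F \in Delta -> (#|F| <= d.+1)%N)].

Definition xmon (F : {set 'I_n}) : R := \prod_(i in F) 'X_i.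

Definition SR_ideal (Delta : {set {set 'I_n}}) : R -> Prop :=
  ideal_gen (fun q => exists2 F : {set 'I_n}, F \notin Delta & q = xmon F).

(* g_1,...,g_k is a system of parameters for I' (in the situation of the
   context, where k = dim R/I'): homogeneous elements such that
   R/(I' + (g_1,...,g_k)) is finite-dimensional over K. *)
Definition system_of_parameters (I' : R -> Prop) (gs : seq R) : Prop :=
  (forall g, g \in gs -> homogeneous g) /\ fin_dim_quotient (ideal_add I' gs).

End Defs.

(* Main.v *)
Require Import Defs.
From HB Require Import structures.
From mathcomp Require Import all_boot all_order all_algebra.
From mathcomp Require Import mpoly.
From mathcomp Require Import zify.
Set Implicit Arguments. Unset Strict Implicit. Unset Printing Implicit Defensive.
Import GRing.Theory.
Local Open Scope ring_scope.

Section IdealLemmas.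
Variables (K : fieldType) (n : nat).
Local Notation R := {mpoly K[n]}.
Implicit Types (S T : R -> Prop).

Lemma ig0 S : ideal_gen S 0.
Proof. by exists 0%N, (fun _ => 0), (fun _ => 0); split=> [[]//|]; rewrite big_ord0. Qed.

Lemma igS S p : S p -> ideal_gen S p.
Proof.
move=> Sp; exists 1%N, (fun _ => 1), (fun _ => p); split=> // .
by rewrite big_ord1 mul1r.
Qed.

Lemma igD S p q : ideal_gen S p -> ideal_gen S q -> ideal_gen S (p + q).
Proof.
move=> [m1 [r1 [s1 [H1 ->]]]] [m2 [r2 [s2 [H2 ->]]]].
exists (m1 + m2)%N, (fun j => match split j with inl a => r1 a | inr b => r2 b end),
  (fun j => match split j with inl a => s1 a | inr b => s2 b end); split.
  by move=> j; case: (split j).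
rewrite big_split_ord /=; congr (_ + _); apply: eq_bigr => i _.
  by rewrite (unsplitK (inl i)).
by rewrite (unsplitK (inr i)).
Qed.

Lemma igM S a p : ideal_gen S p -> ideal_gen S (a * p).
Proof.
move=> [m [r [s [H ->]]]]; exists m, (fun j => a * r j), s; split=> //.
by rewrite mulr_sumr; apply: eq_bigr => j _; rewrite mulrA.
Qed.

Lemma igMr S a p : ideal_gen S p -> ideal_gen S (p * a).
Proof. by rewrite mulrC; apply: igM. Qed.

Lemma igN S p : ideal_gen S p -> ideal_gen S (- p).
Proof. by move=> H; rewrite -mulN1r; apply: igM. Qed.

Lemma igB S p q : ideal_gen S p -> ideal_gen S q -> ideal_gen S (p - q).
Proof. by move=> Hp Hq; apply: igD => //; apply: igN. Qed.

Lemma igZ S (c : K) p : ideal_gen S p -> ideal_gen S (c *: p).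
Proof. by move=> H; rewrite -mul_mpolyC; apply: igM. Qed.

Lemma ig_sum S (I : Type) (r : seq I) (P : pred I) (F : I -> R) :
  (forall i, P i -> ideal_gen S (F i)) -> ideal_gen S (\sum_(i <- r | P i) F i).
Proof.
move=> H; elim: r => [|x r IH]; first by rewrite big_nil; apply: ig0.
rewrite big_cons; case: ifP => Px //; apply: igD => //; exact: H.
Qed.

Lemma ig_sub S T p : (forall q, S q -> ideal_gen T q) -> ideal_gen S p -> ideal_gen T p.
Proof.
move=> ST [m [r [s [H ->]]]]; apply: ig_sum => j _; apply: igM; exact: ST.
Qed.

End IdealLemmas.

Section PolyLemma.
Variables (K : fieldType) (n : nat).
Local Notation R := {mpoly K[n]}.

Lemma pihomogM (r g : R) (e k : nat) : g \is e.-homog ->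
  pihomog mdeg k (r * g) = if (e <= k)%N then pihomog mdeg (k - e) r * g else 0.
Proof.
move=> hg; rewrite {1 2}(mpolyE r) mulr_suml !linear_sum /=.
case: ifP => ek; last first.
  apply: big1 => a _; rewrite -scalerAl linearZ /=.
  rewrite (@pihomog_ne0 _ _ _ (mdeg a + e)%N) ?scaler0 //.
    by apply/eqP => E; move: ek; rewrite -E leq_addl.
  by apply: dhomogM => //; rewrite dhomogX.
rewrite mulr_suml; apply: eq_bigr => a _.
rewrite -!scalerAl !linearZ /= -scalerAl; congr (_ *: _).
rewrite pihomogX.
have hag : 'X_[a] * g \is (mdeg a + e)%N.-homog by apply: dhomogM => //; rewrite dhomogX.
case: eqP => [E|NE].
  by rewrite pihomog_dE // -(subnK ek) -E.
rewrite mul0r (@pihomog_ne0 _ _ _ (mdeg a + e)%N) //.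
by apply/eqP => E; apply: NE; rewrite -E addnK.
Qed.

End PolyLemma.

Section Main.
Variables (K : fieldType) (m : nat).
Local Notation n := m.+1.
Local Notation R := {mpoly K[n]}.
Variables (f : 'I_n -> R) (e : 'I_n -> nat).
Hypothesis fh : forall j, f j \is (e j).-homog.
Hypothesis fnz : forall j, f j != 0.
Definition Id (i : nat) := ideal_gen (fun q => exists j : 'I_n, (j < i)%N /\ q = f j).
Hypothesis reg : forall (i : 'I_n) p, Id i (p * f i) -> Id i p.

Local Notation V k := (dhomog n K k).

Definition mulfun (j : 'I_n) (k : nat) (p : V (k - e j)) : V k :=
  indhomog k (pihomog mdeg k (val p * f j)).

Lemma val_indhomog k (p : R) : p \is k.-homog -> val (indhomog k p : V k) = p.
Proof. by move=> h; rewrite /indhomog val_insubd h. Qed.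

Lemma val_mulfun j k p : val (@mulfun j k p) = pihomog mdeg k (val p * f j).
Proof. by rewrite val_indhomog // pihomogP. Qed.

Lemma val_mulfun_le j k p : (e j <= k)%N -> val (@mulfun j k p) = val p * f j.
Proof.
move=> ek; rewrite val_mulfun (pihomogM _ _ (fh j)) ek pihomog_dE //.
exact: dhomog_is_dhomog.
Qed.

Lemma mulfun_lin j k : linear (@mulfun j k).
Proof.
move=> c p q; apply: val_inj; rewrite /= !val_mulfun /=.
by rewrite mulrDl -scalerAl linearP.
Qed.

Section Inst.
Variables (j : 'I_n) (k : nat).
HB.instance Definition _ := GRing.isLinear.Build K (V (k - e j)) (V k) _ (@mulfun j k)
  (@mulfun_lin j k).
End Inst.

Definition mulh j k : 'Hom(V (k - e j), V k) := linfun (@mulfun j k).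

Lemma mulhE j k p : mulh j k p = mulfun p.
Proof. by rewrite /mulh lfunE. Qed.

Definition Jsp (i k : nat) : {vspace V k} :=
  (\sum_(j < n | (j < i)%N && (e j <= k)%N) (mulh j k @: fullv))%VS.

Lemma IdP i (j : 'I_n) : (j < i)%N -> Id i (f j).
Proof. by move=> ji; apply: igS; exists j. Qed.

Lemma L1 i k (p : V k) : p \in Jsp i k -> Id i (val p).
Proof.
move/memv_sumP => [vs Hvs ->]; rewrite raddf_sum /=.
apply: ig_sum => j /andP[ji ek]; move/memv_imgP: (Hvs j (introT andP (conj ji ek))).
move=> [q _ ->]; rewrite mulhE val_mulfun_le //.
by apply: igM; apply: IdP.
Qed.

Lemma Jsp_img i k (j : 'I_n) q : (j < i)%N -> (e j <= k)%N -> mulh j k q \in Jsp i k.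
Proof.
move=> ji ek; apply: (subvP (sumv_sup j _ (subvv _))); first by rewrite ji ek.
exact: memv_img (memvf q).
Qed.

Lemma L2 i k (p : V k) : Id i (val p) -> p \in Jsp i k.
Proof.
move=> [M [r [s [Hs Hp]]]].
have -> : p = \sum_(l < M) (indhomog k (pihomog mdeg k (r l * s l)) : V k).
  apply: val_inj; rewrite raddf_sum /=.
  rewrite -(pihomog_dE (dhomog_is_dhomog p)) Hp linear_sum /=.
  by apply: eq_bigr => l _; rewrite val_indhomog // pihomogP.
apply: memv_suml => l _; case: (Hs l) => j [ji ->].
case ek: (e j <= k)%N.
  have -> : (indhomog k (pihomog mdeg k (r l * f j)) : V k) =
     mulh j k (indhomog (k - e j) (pihomog mdeg (k - e j) (r l))).
    apply: val_inj; rewrite mulhE val_mulfun_le // val_indhomog ?pihomogP //.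
    by rewrite val_indhomog ?(pihomogM _ _ (fh j)) ?ek // pihomogP.
  exact: Jsp_img.
rewrite (pihomogM _ _ (fh j)) ek.
have -> : (indhomog k 0 : V k) = 0 by apply: val_inj; rewrite val_indhomog // dhomog0.
exact: mem0v.
Qed.


Lemma mulh_inj (i : 'I_n) k : (e i <= k)%N -> lker (mulh i k) == 0%VS.
Proof.
move=> ek; apply/lker0P => p q; rewrite !mulhE => /(congr1 val).
by rewrite !val_mulfun_le // => /(mulIf (fnz i)) /val_inj.
Qed.

Lemma Jsp_succ (i : 'I_n) k : (e i <= k)%N ->
  Jsp i.+1 k = (Jsp i k + mulh i k @: fullv)%VS.
Proof.
move=> ek; rewrite /Jsp (bigD1 i) /=; last by rewrite ltnSn ek.
rewrite addvC; congr (_ + _)%VS; apply: eq_bigl => j.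
case: (eqVneq j i) => [->|ne]; first by rewrite ltnn !andbF.
have ne' : (j : nat) != i by [].
by rewrite andbT ltnS [(j < i)%N]ltn_neqAle ne'.
Qed.

Lemma Jsp_succ_gt (i : 'I_n) k : (k < e i)%N -> Jsp i.+1 k = Jsp i k.
Proof.
move=> ke; rewrite /Jsp; apply: eq_bigl => j.
case: (eqVneq j i) => [->|ne]; first by rewrite ltnn (leqNgt (e i)) ke !andbF.
have ne' : (j : nat) != i by [].
by rewrite ltnS [(j < i)%N]ltn_neqAle ne'.
Qed.

Lemma cap_eq (i : 'I_n) k : (e i <= k)%N ->
  (Jsp i k :&: mulh i k @: fullv)%VS = (mulh i k @: Jsp i (k - e i))%VS.
Proof.
move=> ek; apply/vspaceP => v; apply/memv_capP/memv_imgP.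
  move=> [vJ /memv_imgP [q _ vq]]; exists q => //.
  apply: L2; apply: reg; have := L1 vJ; by rewrite vq mulhE val_mulfun_le.
move=> [q qJ ->]; split; last exact: memv_img (memvf q).
by apply: L2; rewrite mulhE val_mulfun_le //; apply: igMr; apply: L1.
Qed.

Lemma dim_step (i : 'I_n) k : (e i <= k)%N ->
  (\dim (Jsp i.+1 k) + \dim (Jsp i (k - e i)) =
   \dim (Jsp i k) + \dim (fullv : {vspace V (k - e i)}))%N.
Proof.
move=> ek; have inj := mulh_inj ek.
have d1 : \dim (mulh i k @: fullv) = \dim (fullv : {vspace V (k - e i)}).
  by apply: limg_dim_eq; rewrite (eqP inj) capv0.
have d2 : \dim (mulh i k @: Jsp i (k - e i)) = \dim (Jsp i (k - e i)).
  by apply: limg_dim_eq; rewrite (eqP inj) capv0.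
by rewrite Jsp_succ // -d1 -d2 -cap_eq //; exact: dimv_sum_cap.
Qed.

End Main.

Section Count.
Variables (m : nat).
Local Notation n := m.+1.
Variable (e : 'I_n -> nat).

Definition sb k : seq 'X_{1..n} := [seq s2m t | t : k.-tuple 'I_n <- enum (basis n k)].

Lemma mem_sb k a : (a \in sb k) = (mdeg a == k).
Proof. by rewrite basis_cover. Qed.

Definition Pc (i : nat) (a : 'X_{1..n}) : bool :=
  [forall j : 'I_n, (j < i)%N ==> (a j < e j)%N].

Definition C i k := count (Pc i) (sb k).

Lemma C0 k : C 0 k = 'C(k + m, k).
Proof.
rewrite /C (eq_count (a2 := predT)) ?count_predT ?size_basis //.
by move=> a; apply/forallP => j.
Qed.

Definition shift (i : 'I_n) t (b : 'X_{1..n}) : 'X_{1..n} :=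
  (b + [multinom (if j == i then t else 0%N) | j < n])%MM.

Lemma shiftE i t b j : shift i t b j = (b j + (if j == i then t else 0))%N.
Proof. by rewrite /shift mnmDE mnmE. Qed.

Lemma mdeg_shift i t b : mdeg (shift i t b) = (mdeg b + t)%N.
Proof.
rewrite /shift mdegD; congr (_ + _)%N; rewrite mdegE (bigD1 i) //= mnmE eqxx.
by rewrite big1 ?addn0 // => j /negbTE; rewrite mnmE => ->.
Qed.

Lemma coord_le_mdeg (a : 'X_{1..n}) i : (a i <= mdeg a)%N.
Proof. by rewrite mdegE (bigD1 i) //= leq_addr. Qed.

Lemma count_split (T : Type) (P q : pred T) s :
  count P s = (count (fun a => P a && q a) s + count (fun a => P a && ~~ q a) s)%N.
Proof.
elim: s => //= x s ->; case: (P x); case: (q x) => /=; lia.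
Qed.

Lemma C_step (i : 'I_n) k : (e i <= k)%N -> C i k = (C i.+1 k + C i (k - e i))%N.
Proof.
move=> ek; rewrite /C (count_split (Pc i) (fun a : 'X_{1..n} => a i < e i)%N).
congr (_ + _)%N.
  apply: eq_count => a; rewrite /Pc; apply/andP/forallP.
    move=> [/forallP H lt] j; apply/implyP => ji.
    case: (eqVneq j i) => [->//|ne]; move/implyP: (H j); apply.
    by move: ji; have ne' : (j : nat) != i by []; rewrite ltnS leq_eqVlt (negbTE ne').
  move=> H; split; last by move/implyP: (H i); apply.
  by apply/forallP => j; apply/implyP => ji; move/implyP: (H j); apply; apply: ltnW.
rewrite -count_filter.
have pe : perm_eq [seq a : 'X_{1..n} <- sb k | ~~ (a i < e i)%N] (map (shift i (e i)) (sb (k - e i))).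
  apply: uniq_perm.
  - by apply: filter_uniq; apply: uniq_basis.
  - by rewrite map_inj_uniq ?uniq_basis //; apply: addIm.
  move=> a; rewrite mem_filter mem_sb -leqNgt; apply/andP/mapP.
    move=> [le /eqP da].
    pose b : 'X_{1..n} := [multinom (a j - (if j == i then e i else 0))%N | j < n].
    have ab : a = shift i (e i) b.
      apply/mnmP => j; rewrite shiftE mnmE; case: eqP => [->|_]; last by rewrite !subn0 addn0.
      by rewrite subnK.
    exists b => //; rewrite mem_sb; apply/eqP.
    by move: (mdeg_shift i (e i) b); rewrite -ab da => ->; rewrite addnK.
  move=> [b]; rewrite mem_sb => /eqP db ->; split.
    by rewrite shiftE eqxx leq_addl.
  by rewrite mdeg_shift db subnK.
rewrite (permP pe) count_map; apply: eq_count => b /=; rewrite /Pc.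
apply: eq_forallb => j; case: (eqVneq j i) => [->|ne]; first by rewrite ltnn.
by rewrite shiftE (negbTE ne) addn0.
Qed.

Lemma C_gt (i : 'I_n) k : (k < e i)%N -> C i.+1 k = C i k.
Proof.
move=> ke; apply: eq_in_count => a; rewrite mem_sb => /eqP da; rewrite /Pc.
apply: eq_forallb => j; case: (eqVneq j i) => [->|ne].
  rewrite ltnSn ltnn /=; apply: (leq_ltn_trans _ ke); rewrite -da; exact: coord_le_mdeg.
by have ne' : (j : nat) != i by []; rewrite ltnS leq_eqVlt (negbTE ne').
Qed.

Lemma C_final k : (\sum_(j < n) e j <= k)%N -> C n k = 0%N.
Proof.
move=> Ek; apply/eqP; rewrite -leqn0 leqNgt -has_count; apply/hasPn => a.
rewrite mem_sb => /eqP da; apply/negP => /forallP H.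
have : (\sum_(j < n) (a j).+1 <= \sum_(j < n) e j)%N.
  by apply: leq_sum => j _; move/implyP: (H j); apply.
have -> : (\sum_(j < n) (a j).+1 = \sum_(j < n) a j + \sum_(j < n) 1)%N.
  rewrite -big_split; apply: eq_bigr => j _. exact: (esym (addn1 _)).
rewrite sum1_card card_ord -mdegE da; lia.
Qed.

End Count.

Section Final.
Variables (K : fieldType) (m : nat).
Local Notation n := m.+1.
Local Notation R := {mpoly K[n]}.
Variables (f : 'I_n -> R) (e : 'I_n -> nat).
Hypothesis fh : forall j, f j \is (e j).-homog.
Hypothesis fnz : forall j, f j != 0.
Hypothesis reg : forall (i : 'I_n) p, Id f i (p * f i) -> Id f i p.

Local Notation Jsp := (Jsp f e).

Lemma invariant i k : (i <= n)%N -> (\dim (Jsp i k) + C e i k = 'C(k + m, k))%N.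
Proof.
elim: i k => [|i IH] k.
  move=> _; rewrite C0 /Jsp big_pred0 ?dimv0 //.
move=> lt; pose io : 'I_n := Ordinal lt; rewrite -[i]/(nat_of_ord io).
case: (leqP (e io) k) => ek.
  have h1 := dim_step fh fnz reg ek.
  have h2 := C_step ek.
  have h3 := IH k (ltnW lt).
  have h4 := IH (k - e io)%N (ltnW lt).
  have hd : dim (dhomog n K (k - e io)) = 'C(k - e io + m, k - e io) by [].
  rewrite dimvf hd in h1.
  rewrite /= in h1 h2 h3 h4 *.
  lia.
rewrite Jsp_succ_gt // C_gt //; exact: IH (ltnW lt).
Qed.

Lemma Jsp_full k : (\sum_(j < n) e j <= k)%N -> Jsp n k = fullv.
Proof.
move=> Ek; have := invariant k (leqnn n); rewrite C_final // addn0 => h.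
apply/eqP; rewrite eqEdim subvf dimvf /= h //.
Qed.

Lemma homog_in k p : (\sum_(j < n) e j <= k)%N -> p \is k.-homog -> Id f n p.
Proof.
move=> Ek hp; have := @L1 _ _ f e fh n k (indhomog k p); rewrite val_indhomog //.
by apply; rewrite Jsp_full // memvf.
Qed.

Lemma findim_main : fin_dim_quotient (Id f n).
Proof.
pose E := (\sum_(j < n) e j)%N.
exists #|{: 'X_{1..n < E}}|, (fun j => 'X_[bmnm (enum_val j)]) => p.
exists (fun j => p@_(bmnm (enum_val j))).
set q := p - _.
rewrite (@pihomog_partitionE _ _ mdeg (mmeasure mdeg q) q (leqnn _)).
apply: ig_sum => t _; case: (leqP E t) => Et.
  by apply: (homog_in Et); apply: pihomogP.
rewrite pihomogE big1; first exact: ig0.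
move=> a /eqP da.
have -> : q@_a = 0; last by rewrite scale0r.
rewrite /q mcoeffB raddf_sum /=.
rewrite (eq_bigr (fun j => (fun x : 'X_{1..n < E} => p@_(bmnm x) * (bmnm x == a)%:R) (enum_val j))); last first.
  by move=> j _; rewrite mcoeffZ mcoeffX.
rewrite -(big_enum_val (A := xpredT) (fun x : 'X_{1..n < E} => p@_x * (bmnm x == a)%:R)) /=.
have aE : (mdeg a < E)%N by rewrite da.
rewrite (bigD1 (BMultinom aE)) //= eqxx mulr1 big1 ?addr0 ?subrr //.
move=> x ne; case: eqP => [xa|]; last by rewrite mulr0.
by case/eqP: ne; apply: val_inj.
Qed.

End Final.

Lemma fin_dim_mono (K : fieldType) (n : nat) (J J' : {mpoly K[n]} -> Prop) :
  (forall p, J p -> J' p) -> fin_dim_quotient J -> fin_dim_quotient J'.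
Proof.
move=> JJ [M [b H]]; exists M, b => p; have [c Hc] := H p; exists c; exact: JJ.
Qed.

Lemma findim_gen (K : fieldType) (n : nat) (f : 'I_n -> {mpoly K[n]}) :
  complete_intersection f -> fin_dim_quotient (ideal_gen (fun q => exists j, q = f j)).
Proof.
case: n f => [|m] f [hom [reg prop]].
  exists 1%N, (fun _ => 1) => p; exists (fun _ => p@_0%MM).
  rewrite big_ord1 {1}(nvar0_mpolyC_eq p) // -mul_mpolyC mulr1 subrr; exact: ig0.
pose e j := xchoose (hom j).
have fh : forall j, f j \is (e j).-homog by move=> j; exact: xchooseP (hom j).
have fnz : forall j, f j != 0.
  move=> j; apply/eqP => f0; apply: prop.
  have := reg j 1; rewrite mul1r f0 => /(_ (ig0 _)) H.
  by apply: ig_sub H => q [j' [_ ->]]; apply: igS; exists j'.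
apply: fin_dim_mono (findim_main fh fnz reg).
by move=> p; apply: ig_sub => q [j [_ ->]]; apply: igS; exists j.
Qed.

Unset Implicit Arguments.
Theorem lemma3p6 (K : fieldType) (n d : nat) (f : 'I_n -> {mpoly K[n]}) :
  complete_intersection f ->
  (forall Delta : {set {set 'I_n}}, simplicial_complex_dim Delta d ->
     forall i : 'I_n, (d.+1 <= i)%N -> SR_ideal Delta (f i)) ->
  forall Delta : {set {set 'I_n}}, simplicial_complex_dim Delta d ->
    system_of_parameters (SR_ideal Delta)
      (map f (filter (fun j : 'I_n => (j < d.+1)%N) (enum 'I_n))).
Proof.
move=> ci hyp Delta hD; split.
  by move=> g /mapP [j _ ->]; exact: ci.1 j.
apply: fin_dim_mono (findim_gen ci) => p; apply: ig_sub => q [j ->]; apply: igS.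
case: (ltnP j d.+1) => jd.
  by right; rewrite map_f // mem_filter jd mem_enum.
by left; exact: hyp.
Qed.
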